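(* Let $k\ge2$, $q$, $r$ be integers with $1\le q\le k-1$, $0\le r\le k$, and $r\equiv k \pmod 2$. Let $\beta>0$, $J\in\mathbb{R}$, $\theta=\tanh(\beta J)$, $f_\theta(h)=\operatorname{arctanh}(\theta\tanh h)$, and let $(h_1,h_2)$ be any real solution of $h_1=q f_\theta(h_2)$, $h_2=k f_\theta(h_1)$. Let $h=\{h_x\}_{x\in V}$ be an alternating boundary condition with parameters $q,r,h_1,h_2$ on the half tree (defined in the context), and let $$a(t)=-\frac{1}{2\beta}\ln\big[4\cosh(t+\beta J)\cosh(t-\beta J)\big],\qquad F_n(h)=-\frac{1}{\beta|V_n|}\ln Z_n(h).$$ (a) If $r\neq0$, then $\lim_{n\to\infty}F_n(h)$ exists (whatever the value of $h$ at the root) and equals $$\frac{k(k-q)}{2k^2-rk-rq}\left(a(0)+\frac{k-r}{k-q}\,a(h_1)+\frac{q(k-r)}{k(k-q)}\,a(h_2)\right).$$ (b) If $r=0$ and the root value is $0$, $h_2$ or $-h_2$, then $$\lim_{m\to\infty}F_{2m}(h)=\frac{k-q}{k+1}a(0)+\frac{1}{k+1}a(h_1)+\frac{q}{k+1}a(h_2),\qquad \lim_{m\to\infty}F_{2m+1}(h)=\frac{k-q}{k(k+1)}a(0)+\frac{k}{k+1}a(h_1)+\frac{q}{k(k+1)}a(h_2);$$ if $r=0$ and the root value is $h_1$ or $-h_1$, then $$\lim_{m\to\infty}F_{2m}(h)=\frac{k-q}{k(k+1)}a(0)+\frac{k}{k+1}a(h_1)+\frac{q}{k(k+1)}a(h_2),\qquad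 \lim_{m\to\infty}F_{2m+1}(h)=\frac{k-q}{k+1}a(0)+\frac{1}{k+1}a(h_1)+\frac{q}{k+1}a(h_2).$$
   Context: Half tree: a rooted tree with vertex set $V$ and root $x^0$ in which every vertex (including the root) has exactly $k$ children; so the root has $k$ neighbours and every other vertex has $k+1$. $d(x,y)$ is the graph distance, $V_n=\{x: d(x,x^0)\le n\}$, $W_n=\{x:d(x,x^0)=n\}$, and for $x\in W_n$, $S(x)=\{y\in W_{n+1}: d(x,y)=1\}$ (the $k$ children of $x$). Ising model with zero external field: for a boundary condition $h=\{h_x\in\mathbb{R}\}_{x\in V}$, $$Z_n(h)=\sum_{\sigma\in\{-1,1\}^{V_n}}\exp\Big\{\beta J\sum_{\langle x,y\rangle\subset V_n}\sigma(x)\sigma(y)+\sum_{x\in W_n}h_x\sigma(x)\Big\},$$ where the first sum is over nearest-neighbour pairs with both endpoints in $V_n$. Alternating boundary condition with parameters $q,r,h_1,h_2$: the root is assigned a value $h_{x^0}\in\{0,\pm h_1,\pm h_2\}$, and values are assigned inductively to children: (i) if $h_x=0$, then $h_y=0$ on $r$ vertices $y\in S(x)$, $h_y=h_1$ on half of the remaining $k-r$ vertices of $S(x)$, and $h_y=-h_1$ on the other half; (ii) if $h_x=h_1$ (resp. $-h_1$), then $h_y=h_2$ (resp. $-h_2$) on $q$ vertices of $S(x)$ and $h_y=0$ on the other $k-q$; (iii) if $h_x=h_2$ (resp. $-h_2$), then $h_y=h_1$ (resp. $-h_1$) for all $y\in S(x)$. (The choice of which children receive which values is arbitrary.) *)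

(* Defs.v *)
From HB Require Import structures.
From mathcomp Require Import all_boot all_order all_algebra.
From mathcomp Require Import all_classical all_reals all_analysis.
Set Implicit Arguments. Unset Strict Implicit. Unset Printing Implicit Defensive.
Import Order.TTheory GRing.Theory Num.Theory.
Local Open Scope ring_scope.

Definition cosh {R : realType} (x : R) : R := (expR x + expR (- x)) / 2.
Definition tanh {R : realType} (x : R) : R :=
  (expR x - expR (- x)) / (expR x + expR (- x)).
Definition artanh {R : realType} (x : R) : R := ln ((1 + x) / (1 - x)) / 2.

Definition f_theta {R : realType} (theta h : R) : R := artanh (theta * tanh h).

(* A vertex is a word over 'I_k; the root x^0 is [::]; the k children of w
   are i :: w (i : 'I_k); the parent of a non-root w is behead w;
   d(w, x^0) = size w. *)
Definition vertex (k : nat) := seq 'I_k.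

Fixpoint words (k n : nat) : seq (vertex k) :=
  if n is m.+1 then [::] :: [seq i :: w | i <- enum 'I_k, w <- words k m]
  else [:: [::]].

Definition Vn (k n : nat) := seq_sub (words k n).

Definition spin {R : realType} (b : bool) : R := if b then 1 else -1.

(* extension of a configuration on V_n to all vertices (value irrelevant
   outside V_n) *)
Definition ext {k n : nat} (s : {ffun Vn k n -> bool}) (w : vertex k) : bool :=
  if insub w is Some u then s u else false.

(* Hamiltonian exponent: beta J sum over edges <x,y> in V_n (each edge is
   {x, parent x} with x non-root) + sum over x in W_n of h_x sigma(x) *)
Definition energy {R : realType} (k n : nat) (beta J : R) (h : vertex k -> R)
    (s : {ffun Vn k n -> bool}) : R :=
  beta * J * (\sum_(x : Vn k n | size (val x) != 0%N)
                 spin (s x) * spin (ext s (behead (val x))))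
  + \sum_(x : Vn k n | size (val x) == n) h (val x) * spin (s x).

Definition Zn {R : realType} (k n : nat) (beta J : R) (h : vertex k -> R) : R :=
  \sum_(s : {ffun Vn k n -> bool}) expR (energy beta J h s).

Definition Fn {R : realType} (k n : nat) (beta J : R) (h : vertex k -> R) : R :=
  - (beta * #|{: Vn k n}|%:R)^-1 * ln (Zn n beta J h).

Definition a_fun {R : realType} (beta J t : R) : R :=
  - (2 * beta)^-1 * ln (4 * cosh (t + beta * J) * cosh (t - beta * J)).

Inductive lab := L0 | Lp1 | Lm1 | Lp2 | Lm2.

Definition lab_eqb (a b : lab) : bool :=
  match a, b with
  | L0, L0 | Lp1, Lp1 | Lm1, Lm1 | Lp2, Lp2 | Lm2, Lm2 => true
  | _, _ => false
  end.

Lemma lab_eqP : Equality.axiom lab_eqb.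
Proof. by case; case; constructor. Qed.
HB.instance Definition _ := hasDecEq.Build lab lab_eqP.

Definition lab_val {R : realType} (h1 h2 : R) (a : lab) : R :=
  match a with
  | L0 => 0 | Lp1 => h1 | Lm1 => - h1 | Lp2 => h2 | Lm2 => - h2
  end.

Definition nchild {k : nat} (l : vertex k -> lab) (x : vertex k) (a : lab) : nat :=
  #|[pred i : 'I_k | l (i :: x) == a]|.

Definition alternating_bc (k q r : nat) (l : vertex k -> lab) : Prop :=
  forall x : vertex k,
    match l x with
    | L0 => [/\ nchild l x L0 = r, nchild l x Lp1 = (k - r)./2
              & nchild l x Lm1 = (k - r)./2]
    | Lp1 => nchild l x Lp2 = q /\ nchild l x L0 = (k - q)%N
    | Lm1 => nchild l x Lm2 = q /\ nchild l x L0 = (k - q)%N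
    | Lp2 => nchild l x Lp1 = k
    | Lm2 => nchild l x Lm1 = k
    end.

Definition bc {R : realType} {k : nat} (h1 h2 : R) (l : vertex k -> lab) :
  vertex k -> R := fun x => lab_val h1 h2 (l x).

Arguments alternating_bc : clear implicits.
Arguments Fn {R} k n beta J h.

(* Main.v *)
Require Import Defs.
From HB Require Import structures.
From mathcomp Require Import all_boot all_order all_algebra.
From mathcomp Require Import all_classical all_reals all_analysis.
From mathcomp Require Import ring lra zify.
Import Order.TTheory GRing.Theory Num.Theory.
Import numFieldNormedType.Exports.
Local Open Scope classical_set_scope.
Local Open Scope ring_scope.


Set Implicit Arguments. Unset Strict Implicit. Unset Printing Implicit Defensive.

Section Words.
Variable k : nat.

Lemma mem_words n w : (w \in words k n) = (size w <= n)%N.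
Proof.
elim: n w => [|n IH] [|i w] //=.
rewrite in_cons /=.
apply/allpairsP/idP.
  by case=> [[j u]] /= [_ Hu] [Hi Hw]; subst; rewrite ltnS -IH.
by rewrite ltnS => Hw; exists (i, w); rewrite /= mem_enum IH.
Qed.

Lemma words_uniq n : uniq (words k n).
Proof.
elim: n => [|n IH] //=.
rewrite /=; apply/andP; split.
  by apply/allpairsP => [[[i w] /= [_ _]]].
apply: allpairs_uniq => //; first exact: enum_uniq.
by move=> [i w] [j u] _ _ /= [-> ->].
Qed.

Lemma sum_seq_sub {R : realType} n (P : pred (vertex k)) (g : vertex k -> R) :
  \sum_(x : Vn k n | P (val x)) g (val x) = \sum_(w <- words k n | P w) g w.
Proof.
rewrite -[in RHS](val_seq_sub_enum (words_uniq n)) big_map.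
by rewrite /index_enum !unlock.
Qed.


Lemma card_Vn n : #|{: Vn k n}| = size (words k n).
Proof. exact: card_seq_sub (words_uniq n). Qed.

Lemma size_words_S n : size (words k n.+1) = (size (words k n) * k).+1.
Proof. by rewrite /= size_allpairs size_enum_ord mulnC. Qed.

Definition wtl n : seq (vertex k) :=
  if n is m.+1 then [seq i :: w | i <- enum 'I_k, w <- words k m] else [::].

Lemma words_cons n : words k n = [::] :: wtl n.
Proof. by case: n. Qed.

Lemma wtl_size n w : w \in wtl n -> size w != 0%N.
Proof. by case: n => //= n /allpairsP [[i u] /= [_ _ ->]]. Qed.

Lemma sum_words_nil {R : realType} n (f : vertex k -> R) :
  \sum_(w <- words k n) f w = f [::] + \sum_(w <- words k n | size w != 0%N) f w.
Proof.
rewrite words_cons !big_cons /=; congr (_ + _).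
rewrite [RHS]big_seq_cond [LHS]big_seq; apply: eq_bigl => w.
by case Hw: (w \in wtl n) => //=; rewrite (wtl_size Hw).
Qed.

Definition rwords n := [seq rcons w i | i <- enum 'I_k, w <- words k n].

Lemma words_perm n : perm_eq (words k n.+1) ([::] :: rwords n).
Proof.
apply: uniq_perm; first exact: words_uniq.
  rewrite /= ; apply/andP; split.
    by apply/allpairsP => [[[i w] /= [_ _]]]; case: w.
  apply: allpairs_uniq; [exact: enum_uniq|exact: words_uniq|].
  by move=> [i w] [j u] _ _ /= /rcons_inj [-> ->].
move=> w; rewrite mem_words in_cons.
case: w => [|x w] //=.
apply/idP/allpairsP.
  rewrite ltnS => Hw; exists (last x w, belast x w) => /=.
  by rewrite mem_enum mem_words size_belast -lastI.
case=> [[i u]] /= [_ Hu H]; rewrite mem_words in Hu.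
by rewrite -ltnS -[X in (X < _)%N]/(size (x :: w)) H size_rcons.
Qed.

Lemma sum_words_S {R : realType} n (f : vertex k -> R) :
  \sum_(w <- words k n.+1) f w = f [::] + \sum_(i < k) \sum_(u <- words k n) f (rcons u i).
Proof.
rewrite (perm_big _ (words_perm n)) big_cons; congr (_ + _).
by rewrite /rwords big_allpairs_dep big_enum.
Qed.

Lemma sum_words_S_cond {R : realType} n (P : pred (vertex k)) (f : vertex k -> R) :
  \sum_(w <- words k n.+1 | P w) f w = (if P [::] then f [::] else 0) +
     \sum_(i < k) \sum_(u <- words k n | P (rcons u i)) f (rcons u i).
Proof.
rewrite big_mkcond sum_words_S; congr (_ + _).
by apply: eq_bigr => i _; rewrite [RHS]big_mkcond.
Qed.
End Words.

Section Ext.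
Variable k : nat.

Lemma ext_in n (s : {ffun Vn k n -> bool}) (u : Vn k n) : ext s (val u) = s u.
Proof. by rewrite /ext valK. Qed.

Lemma ext_out n (s : {ffun Vn k n -> bool}) w : (n < size w)%N -> ext s w = false.
Proof.
move=> H; rewrite /ext; case: insubP => // u; rewrite mem_words => Hw.
by rewrite leqNgt H in Hw.
Qed.

Definition build n (b : bool) (F : {ffun 'I_k -> {ffun Vn k n -> bool}}) :
  {ffun Vn k n.+1 -> bool} :=
  [ffun x => match val x with [::] => b | y :: ys => ext (F (last y ys)) (belast y ys) end].

Definition unbuild n (s : {ffun Vn k n.+1 -> bool}) :
  bool * {ffun 'I_k -> {ffun Vn k n -> bool}} :=
  (ext s [::], [ffun i => [ffun w : Vn k n => ext s (rcons (val w) i)]]).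

Lemma ext_build_nil n b F : ext (@build n b F) [::] = b.
Proof.
have Hin : ([::] : vertex k) \in words k n.+1 by rewrite mem_words.
by rewrite -[[::]]/(val (Sub [::] Hin : Vn k n.+1)) ext_in ffunE /=.
Qed.

Lemma ext_build_rcons n b F u i : ext (@build n b F) (rcons u i) = ext (F i) u.
Proof.
case: (leqP (size u) n) => Hu; last first.
  by rewrite !ext_out // size_rcons ltnS.
have Hin : rcons u i \in words k n.+1 by rewrite mem_words size_rcons.
rewrite -[rcons u i]/(val (Sub (rcons u i) Hin : Vn k n.+1)) ext_in ffunE /=.
by case: u {Hu Hin} => [|y ys] //=; rewrite ?last_rcons ?belast_rcons.
Qed.

Lemma build_bij n : bijective (fun p => @build n p.1 p.2).
Proof.
exists (@unbuild n).
  case=> b F /=; rewrite /unbuild ext_build_nil; congr pair.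
  apply/ffunP => i; apply/ffunP => w; rewrite !ffunE ext_build_rcons.
  exact: ext_in.
move=> s; apply/ffunP => x; rewrite ffunE /unbuild /=.
case Hx: (val x) => [|y ys]; first by rewrite -(ext_in s x) Hx.
have Hin : belast y ys \in words k n.
  have := valP x; rewrite Hx !mem_words /= size_belast ltnS; exact.
rewrite -[belast y ys]/(val (Sub (belast y ys) Hin : Vn k n)) ext_in !ffunE SubK.
by rewrite -lastI -Hx ext_in.
Qed.

Lemma sum_build {R : realType} n (G : {ffun Vn k n.+1 -> bool} -> R) :
  \sum_s G s = \sum_(b : bool) \sum_(F : {ffun 'I_k -> {ffun Vn k n -> bool}}) G (build b F).
Proof.
rewrite (reindex (fun p => @build n p.1 p.2)); last exact/onW_bij/build_bij.
by rewrite pair_big.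
Qed.

End Ext.

Section Energy.
Variables (R : realType) (k : nat) (beta J : R).

Definition Esq n (h : vertex k -> R) (sg : vertex k -> bool) : R :=
  beta * J * (\sum_(w <- words k n | size w != 0%N) spin (sg w) * spin (sg (behead w)))
  + \sum_(w <- words k n | size w == n) h w * spin (sg w).

Lemma energyE n h (s : {ffun Vn k n -> bool}) : energy beta J h s = Esq n h (ext s).
Proof.
rewrite /energy /Esq -!(sum_seq_sub (R:=R) n); congr (_ * _ + _).
  by apply: eq_bigr => x _; rewrite ext_in.
by apply: eq_bigr => x _; rewrite ext_in.
Qed.

Lemma behead_rcons (u : vertex k) i :
  behead (rcons u i) = if u is [::] then [::] else rcons (behead u) i.
Proof. by case: u. Qed.

Lemma Esq_build n h b F :
  Esq n.+1 h (ext (@build k n b F)) =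
  \sum_(i < k) (beta * J * (spin b * spin (ext (F i) [::]))
                + Esq n (fun w => h (rcons w i)) (ext (F i))).
Proof.
rewrite /Esq !sum_words_S_cond /= add0r.
rewrite add0r.
under [RHS]eq_bigr => i _ do rewrite addrA -mulrDr.
rewrite big_split /= -mulr_sumr.
congr (_ * _ + _).
  apply: eq_bigr => i _.
  rewrite (eq_bigl xpredT); last by move=> u; rewrite size_rcons.
  rewrite sum_words_nil /= -[[:: i]]/(rcons [::] i) ext_build_rcons ext_build_nil mulrC; congr (_ + _).
  apply: eq_bigr => u Hu; rewrite behead_rcons.
  by case: u Hu => // x u _; rewrite !ext_build_rcons.
apply: eq_bigr => i _.
rewrite (eq_bigl (fun u => size u == n)); last by move=> u; rewrite size_rcons.
by apply: eq_bigr => u _; rewrite ext_build_rcons.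
Qed.

End Energy.

Section Partition.
Variables (R : realType) (k : nat) (beta J : R).

Definition Y n (h : vertex k -> R) (b : bool) : R :=
  \sum_(s : {ffun Vn k n -> bool})
     expR (beta * J * (spin b * spin (ext s [::])) + Esq beta J n h (ext s)).

Definition hsub (h : vertex k -> R) (i : 'I_k) : vertex k -> R := fun w => h (rcons w i).

Lemma Z_S n h : Zn n.+1 beta J h = \sum_(b : bool) \prod_(i < k) Y n (hsub h i) b.
Proof.
rewrite /Zn; under eq_bigr do rewrite energyE.
rewrite sum_build; apply: eq_bigr => b _.
under eq_bigr do rewrite Esq_build expR_sum.
by rewrite bigA_distr_bigA.
Qed.

Lemma Y_S n h b : Y n.+1 h b =
  \sum_(c : bool) expR (beta * J * (spin b * spin c)) * \prod_(i < k) Y n (hsub h i) c.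
Proof.
rewrite /Y sum_build; apply: eq_bigr => c _.
under eq_bigr do rewrite Esq_build ext_build_nil expRD expR_sum.
by rewrite -mulr_sumr bigA_distr_bigA.
Qed.

Lemma sum_Vn0 (G : {ffun Vn k 0 -> bool} -> R) :
  \sum_s G s = \sum_(c : bool) G [ffun _ => c].
Proof.
have Hin : ([::] : vertex k) \in words k 0 by rewrite mem_words.
rewrite (reindex (fun c : bool => [ffun _ : Vn k 0 => c])) //.
apply/onW_bij; exists (fun s : {ffun Vn k 0 -> bool} => ext s [::]).
  by move=> c /=; rewrite -[[::]]/(val (Sub [::] Hin : Vn k 0)) ext_in ffunE.
move=> s; apply/ffunP => x; rewrite ffunE.
have := valP x; rewrite mem_words leqn0 size_eq0 => /eqP <-.
exact: ext_in.
Qed.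

Lemma Y_0 h b : Y 0 h b =
  \sum_(c : bool) expR (spin c * (beta * J * spin b + h [::])).
Proof.
rewrite /Y sum_Vn0; apply: eq_bigr => c _.
have Hin : ([::] : vertex k) \in words k 0 by rewrite mem_words.
have -> : ext [ffun _ : Vn k 0 => c] [::] = c.
  by rewrite -[[::]]/(val (Sub [::] Hin : Vn k 0)) ext_in ffunE.
rewrite /Esq /= !big_cons !big_nil /=.
have -> : ext [ffun _ : Vn k 0 => c] [::] = c.
  by rewrite -[[::]]/(val (Sub [::] Hin : Vn k 0)) ext_in ffunE.
congr expR; ring.
Qed.

End Partition.

Section Key.
Variables (R : realType) (beta J : R).
Hypothesis beta0 : 0 < beta.

Definition Cf (v : R) : R := expR (- beta * a_fun beta J v).
Definition ff (v : R) : R := f_theta (tanh (beta * J)) v.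

Lemma key v (b : bool) :
  \sum_(c : bool) expR (spin c * (beta * J * spin b + v)) = Cf v * expR (spin b * ff v).
Proof.
set X := expR v; set Y := expR (beta * J).
have X0 : 0 < X by exact: expR_gt0.
have Y0 : 0 < Y by exact: expR_gt0.
set P := X * Y + (X * Y)^-1.
set M := X / Y + (X / Y)^-1.
have P0 : 0 < P by rewrite addr_gt0 // ?invr_gt0 mulr_gt0 //.
have M0 : 0 < M by rewrite /M addr_gt0 ?invr_gt0 ?divr_gt0.
have hP : 2 * cosh (v + beta * J) = P.
  by rewrite /cosh /P expRN expRD -/X -/Y; field; rewrite !gt_eqF.
have hM : 2 * cosh (v - beta * J) = M.
  by rewrite /cosh /M expRN expRD expRN -/X -/Y; field; rewrite !gt_eqF.
have hC : - beta * a_fun beta J v = (ln P + ln M) / 2.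
  rewrite /a_fun -lnM ?posrE //; rewrite -hP -hM.
  have -> : 4 * cosh (v + beta * J) * cosh (v - beta * J) =
    2 * cosh (v + beta * J) * (2 * cosh (v - beta * J)) by ring.
  by field; rewrite gt_eqF.
have hT : tanh (beta * J) * tanh v = (P - M) / (P + M).
  rewrite /tanh /P /M !expRN -/X -/Y; field.
  by repeat (apply/andP; split); apply: lt0r_neq0; nra.
have hF : ff v = (ln P - ln M) / 2.
  rewrite /ff /f_theta /artanh hT -ln_div ?posrE //; congr (ln _ / 2).
  field; by repeat (apply/andP; split); apply: lt0r_neq0; nra.
rewrite /Cf hC hF -expRD.
case: b => /=; rewrite !big_bool /= !mul1r ?mulN1r ?mulr1.
  have -> : (ln P + ln M) / 2 + (ln P - ln M) / 2 = ln P by field.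
  by rewrite lnK ?posrE // -hP /cosh [beta * J + v]addrC [2 * _]mulrC divfK // pnatr_eq0.
have -> : (ln P + ln M) / 2 - (ln P - ln M) / 2 = ln M by field.
by rewrite lnK ?posrE // -hM /cosh mulrN1 [2 * _]mulrC divfK // [- _ + v]addrC.
Qed.

End Key.

Section Main.
Variables (R : realType) (k : nat) (beta J : R).
Hypothesis beta0 : 0 < beta.

Local Notation a := (a_fun beta J).
Local Notation ff := (ff beta J).

Fixpoint Ssum n (h : vertex k -> R) : R :=
  if n is m.+1 then a (h [::]) + \sum_(i < k) Ssum m (hsub h i) else a (h [::]).

Definition compat (h : vertex k -> R) := forall x, h x = \sum_(i < k) ff (h (i :: x)).

Lemma compat_sub h i : compat h -> compat (hsub h i).
Proof. by move=> H x; rewrite /hsub H. Qed.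

Lemma Y_form n h b : compat h ->
  Y beta J n h b = expR (- beta * Ssum n h) * expR (spin b * ff (h [::])).
Proof.
elim: n h b => [|n IH] h b Hh.
  by rewrite Y_0 key.
rewrite Y_S.
under eq_bigr => c _ do rewrite (eq_bigr _ (fun i _ => IH _ c (compat_sub i Hh))).
under eq_bigr => c _ do rewrite big_split /= -!expR_sum -mulrA -!expRD.
rewrite /=.
rewrite -[\sum_(i < k) - beta * _]mulr_sumr.
under eq_bigr => c _ do rewrite -mulr_sumr.
have -> : \sum_(i < k) ff (hsub h i [::]) = h [::] by rewrite (Hh [::]).
set SS := \sum_(i < k) Ssum n (hsub h i).
transitivity (\sum_(c : bool) expR (- beta * SS) * expR (spin c * (beta * J * spin b + h [::]))).
  by apply: eq_bigr => c _; rewrite -expRD; congr expR; ring.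
rewrite -mulr_sumr key // /Cf mulrA -expRD; congr (expR _ * _); ring.
Qed.

Lemma Z_form n h : compat h ->
  Zn n.+1 beta J h = expR (- beta * \sum_(i < k) Ssum n (hsub h i)) *
                     (expR (h [::]) + expR (- h [::])).
Proof.
move=> Hh; rewrite Z_S.
under eq_bigr => c _ do rewrite (eq_bigr _ (fun i _ => Y_form n c (compat_sub i Hh))).
under eq_bigr => c _ do rewrite big_split /= -!expR_sum.
rewrite -[\sum_(i < k) - beta * _]mulr_sumr.
under eq_bigr => c _ do rewrite -mulr_sumr.
have -> : \sum_(i < k) ff (hsub h i [::]) = h [::] by rewrite (Hh [::]).
rewrite -mulr_sumr big_bool /= mul1r mulN1r addrC.
done.
Qed.

Lemma F_form n h : compat h ->
  Fn k n.+1 beta J h = (\sum_(i < k) Ssum n (hsub h i)) / (#|{: Vn k n.+1}|%:R)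
      - ln (expR (h [::]) + expR (- h [::])) / (beta * #|{: Vn k n.+1}|%:R).
Proof.
move=> Hh; rewrite /Fn Z_form // lnM ?posrE ?expR_gt0 ?addr_gt0 ?expR_gt0 // expRK.
have V0 : (0 < #|{: Vn k n.+1}|)%N.
  by apply/card_gt0P; exists (Sub [::] (isT : ([::] : vertex k) \in words k n.+1)).
have V0' : (#|{: Vn k n.+1}|%:R : R) != 0 by rewrite pnatr_eq0 -lt0n.
by field; rewrite V0' (lt0r_neq0 beta0).
Qed.

End Main.

Section Labels.
Variables (R : realType) (k : nat).

Definition labs := [:: L0; Lp1; Lm1; Lp2; Lm2].

Lemma sum_lab (l : vertex k -> lab) x (g : lab -> R) :
  \sum_(i < k) g (l (i :: x)) = \sum_(c <- labs) (nchild l x c)%:R * g c.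
Proof.
transitivity (\sum_(i < k) \sum_(c <- labs) ((l (i :: x) == c)%:R * g c)).
  apply: eq_bigr => i _; rewrite /labs !big_cons big_nil.
  by case: (l (i :: x)) => /=; rewrite !mul1r !mul0r ?add0r ?addr0.
rewrite exchange_big /=; apply: eq_bigr => c _.
rewrite -mulr_suml; congr (_ * _).
rewrite /nchild -sumr_const.
rewrite [RHS]big_mkcond /=; apply: eq_bigr => i _; rewrite inE.
by case: (_ == _).
Qed.

Lemma nchild_tot (l : vertex k -> lab) x :
  (nchild l x L0 + nchild l x Lp1 + nchild l x Lm1 + nchild l x Lp2 + nchild l x Lm2)%N = k.
Proof.
have := sum_lab l x (fun _ => 1).
rewrite sumr_const card_ord /labs !big_cons big_nil !mulr1 addr0 -!natrD.
by move=> /eqP; rewrite eqr_nat !addnA eq_sym => /eqP.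
Qed.

End Labels.

Section FF.
Variables (R : realType) (beta J : R).

Lemma cosh_even (x : R) : cosh (- x) = cosh x.
Proof. by rewrite /cosh opprK addrC. Qed.

Lemma cosh_gt0 (x : R) : 0 < cosh x.
Proof. by rewrite /cosh divr_gt0 ?addr_gt0 ?expR_gt0. Qed.

Lemma ff_form v : ff beta J v =
  (ln (2 * cosh (v + beta * J)) - ln (2 * cosh (v - beta * J))) / 2.
Proof.
set X := expR v; set Y := expR (beta * J).
have X0 : 0 < X by exact: expR_gt0.
have Y0 : 0 < Y by exact: expR_gt0.
set P := X * Y + (X * Y)^-1.
set M := X / Y + (X / Y)^-1.
have P0 : 0 < P by rewrite addr_gt0 // ?invr_gt0 mulr_gt0 //.
have M0 : 0 < M by rewrite /M addr_gt0 ?invr_gt0 ?divr_gt0.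
have hP : 2 * cosh (v + beta * J) = P.
  by rewrite /cosh /P expRN expRD -/X -/Y; field; rewrite !gt_eqF.
have hM : 2 * cosh (v - beta * J) = M.
  by rewrite /cosh /M expRN expRD expRN -/X -/Y; field; rewrite !gt_eqF.
have hT : tanh (beta * J) * tanh v = (P - M) / (P + M).
  rewrite /tanh /P /M !expRN -/X -/Y; field.
  by repeat (apply/andP; split); apply: lt0r_neq0; nra.
rewrite hP hM /ff /f_theta /artanh hT -ln_div ?posrE //; congr (ln _ / 2).
field; by repeat (apply/andP; split); apply: lt0r_neq0; nra.
Qed.

Lemma ff_odd v : ff beta J (- v) = - ff beta J v.
Proof.
rewrite !ff_form (_ : - v + beta * J = - (v - beta * J)); last by ring.
by rewrite (_ : - v - beta * J = - (v + beta * J)) ?cosh_even; [ring|ring].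
Qed.

Lemma ff0 : ff beta J 0 = 0.
Proof. by have := ff_odd 0; rewrite oppr0 => H; lra. Qed.

Lemma a_even v : a_fun beta J (- v) = a_fun beta J v.
Proof.
rewrite /a_fun (_ : - v + beta * J = - (v - beta * J)); last by ring.
rewrite (_ : - v - beta * J = - (v + beta * J)); last by ring.
by rewrite !cosh_even -mulrA [cosh (v - _) * _]mulrC mulrA.
Qed.

End FF.

Section Alt.
Variables (R : realType) (k q r : nat) (beta J h1 h2 : R).
Hypotheses (qk : (q <= k)%N) (rk : (r <= k)%N) (oddrk : odd r = odd k).
Hypotheses (Hh1 : h1 = q%:R * f_theta (tanh (beta * J)) h2)
           (Hh2 : h2 = k%:R * f_theta (tanh (beta * J)) h1).

Local Notation a := (a_fun beta J).
Let kR : R := k%:R. Let qR : R := q%:R. Let rR : R := r%:R.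

Fixpoint sig n : R * R * R :=
  if n is m.+1 then
    let: (x0, x1, x2) := sig m in
    (a 0 + rR * x0 + (kR - rR) * x1, a h1 + (kR - qR) * x0 + qR * x2, a h2 + kR * x1)
  else (a 0, a h1, a h2).

Definition s0 n := (sig n).1.1.
Definition s1 n := (sig n).1.2.
Definition s2 n := (sig n).2.

Lemma s0S n : s0 n.+1 = a 0 + rR * s0 n + (kR - rR) * s1 n.
Proof. by rewrite /s0 /s1 /=; case: (sig n) => [[x y] z]. Qed.
Lemma s1S n : s1 n.+1 = a h1 + (kR - qR) * s0 n + qR * s2 n.
Proof. by rewrite /s0 /s1 /s2 /=; case: (sig n) => [[x y] z]. Qed.
Lemma s2S n : s2 n.+1 = a h2 + kR * s1 n.
Proof. by rewrite /s2 /s1 /=; case: (sig n) => [[x y] z]. Qed.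

Definition sigl n (c : lab) : R :=
  match c with L0 => s0 n | Lp1 | Lm1 => s1 n | Lp2 | Lm2 => s2 n end.

Lemma half_rk : ((k - r)./2 + (k - r)./2 = k - r)%N.
Proof. by rewrite addnn halfK oddB // oddrk addbb subn0. Qed.

Lemma compat_bc (l : vertex k -> lab) : alternating_bc k q r l ->
  compat beta J (bc h1 h2 l).
Proof.
move=> Hl x; rewrite /bc (@sum_lab R k l x (fun c => ff beta J (lab_val h1 h2 c))).
rewrite /labs !big_cons big_nil addr0 /=.
have tot := @nchild_tot R k l x; have hm := half_rk.
move: (Hl x); case: (l x) => /=.
- case=> e0 e1 e2.
  have e3 : nchild l x Lp2 = 0%N by lia.
  have e4 : nchild l x Lm2 = 0%N by lia.
  rewrite e0 e1 e2 e3 e4 !ff_odd ff0; ring.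
- case=> e3 e0.
  have e1 : nchild l x Lp1 = 0%N by lia.
  have e2 : nchild l x Lm1 = 0%N by lia.
  have e4 : nchild l x Lm2 = 0%N by lia.
  rewrite e0 e1 e2 e3 e4 ff0 Hh1 /ff; ring.
- case=> e4 e0.
  have e1 : nchild l x Lp1 = 0%N by lia.
  have e2 : nchild l x Lm1 = 0%N by lia.
  have e3 : nchild l x Lp2 = 0%N by lia.
  rewrite e0 e1 e2 e3 e4 ff0 !ff_odd Hh1 /ff; ring.
- move=> e1.
  have e0 : nchild l x L0 = 0%N by lia.
  have e2 : nchild l x Lm1 = 0%N by lia.
  have e3 : nchild l x Lp2 = 0%N by lia.
  have e4 : nchild l x Lm2 = 0%N by lia.
  rewrite e0 e1 e2 e3 e4 Hh2 /ff; ring.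
- move=> e2.
  have e0 : nchild l x L0 = 0%N by lia.
  have e1 : nchild l x Lp1 = 0%N by lia.
  have e3 : nchild l x Lp2 = 0%N by lia.
  have e4 : nchild l x Lm2 = 0%N by lia.
  rewrite e0 e1 e2 e3 e4 !ff_odd Hh2 /ff; ring.
Qed.


Lemma alt_sub (l : vertex k -> lab) i : alternating_bc k q r l ->
  alternating_bc k q r (fun w => l (rcons w i)).
Proof. by move=> Hl x; exact: (Hl (rcons x i)). Qed.

Lemma Ssum_bc n (l : vertex k -> lab) : alternating_bc k q r l ->
  Ssum beta J n (bc h1 h2 l) = sigl n (l [::]).
Proof.
elim: n l => [|n IH] l Hl.
  by rewrite /= /bc; case: (l [::]) => //=; rewrite a_even.
rewrite /=.
have -> : \sum_(i < k) Ssum beta J n (hsub (bc h1 h2 l) i) =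
          \sum_(i < k) sigl n (l (i :: [::])).
  by apply: eq_bigr => i _; rewrite -(IH _ (alt_sub i Hl)).
rewrite (@sum_lab R k l [::] (sigl n)).
rewrite /labs !big_cons big_nil addr0 /= /bc.
have tot := @nchild_tot R k l [::]; have hm := half_rk.
move: (Hl [::]); case: (l [::]) => /=.
- case=> e0 e1 e2.
  have e3 : nchild l [::] Lp2 = 0%N by lia.
  have e4 : nchild l [::] Lm2 = 0%N by lia.
  have hmR : ((k - r)./2)%:R + ((k - r)./2)%:R = kR - rR :> R.
    by rewrite -natrD hm natrB.
  rewrite e0 e1 e2 e3 e4 s0S -/rR; rewrite -hmR; ring.
- case=> e3 e0.
  have e1 : nchild l [::] Lp1 = 0%N by lia.
  have e2 : nchild l [::] Lm1 = 0%N by lia.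
  have e4 : nchild l [::] Lm2 = 0%N by lia.
  rewrite e0 e1 e2 e3 e4 s1S natrB //; ring.
- case=> e4 e0.
  have e1 : nchild l [::] Lp1 = 0%N by lia.
  have e2 : nchild l [::] Lm1 = 0%N by lia.
  have e3 : nchild l [::] Lp2 = 0%N by lia.
  rewrite e0 e1 e2 e3 e4 s1S natrB // a_even; ring.
- move=> e1.
  have e0 : nchild l [::] L0 = 0%N by lia.
  have e2 : nchild l [::] Lm1 = 0%N by lia.
  have e3 : nchild l [::] Lp2 = 0%N by lia.
  have e4 : nchild l [::] Lm2 = 0%N by lia.
  rewrite e0 e1 e2 e3 e4 s2S; ring.
- move=> e2.
  have e0 : nchild l [::] L0 = 0%N by lia.
  have e1 : nchild l [::] Lp1 = 0%N by lia.
  have e3 : nchild l [::] Lp2 = 0%N by lia.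
  have e4 : nchild l [::] Lm2 = 0%N by lia.
  rewrite e0 e1 e2 e3 e4 s2S a_even; ring.
Qed.

End Alt.



Section Asym.
Variable R : realType.

Lemma near_oo (P : nat -> Prop) : (\forall n \near \oo, P n) -> exists N, forall n, (N <= n)%N -> P n.
Proof. by case=> N _ HN; exists N => n Hn; apply: HN. Qed.

Lemma oo_near (P : nat -> Prop) N : (forall n, (N <= n)%N -> P n) -> \forall n \near \oo, P n.
Proof. by move=> H; exists N. Qed.

Lemma lin1 (lam : R) (e eps : nat -> R) : `|lam| < 1 -> eps @ \oo --> 0 ->
  (forall n, e n.+1 = lam * e n + eps n) -> e @ \oo --> 0.
Proof.
move=> Hl He Hrec; apply/cvgr0Pnorm_lt => d d0.
set L := `|lam|.
have L0 : 0 <= L by rewrite normr_ge0.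
have del0 : 0 < d * (1 - L) / 2 by rewrite divr_gt0 // mulr_gt0 // subr_gt0.
have [N HN] : exists N, forall n, (N <= n)%N -> `|eps n| < d * (1 - L) / 2.
  by apply: near_oo; move/cvgr0Pnorm_lt: He; apply.
have claim : forall m, `|e (N + m)%N| <= d / 2 + L ^+ m * `|e N|.
  elim=> [|m IH]; first by rewrite addn0 expr0 mul1r lerDr divr_ge0 // ltW.
  rewrite addnS Hrec.
  have := HN (N + m)%N (leq_addr _ _) => Hd.
  apply: (le_trans (ler_normD _ _)); rewrite normrM -/L.
  have := ler_wpM2l L0 IH => H2.
  rewrite exprS; nra.
have eN : 0 < 2 * (`|e N| + 1) by rewrite mulr_gt0 // ltr_pwDr // normr_ge0.
have [M HM] : exists M, forall m, (M <= m)%N -> `|L ^+ m| < d / (2 * (`|e N| + 1)).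
  apply: near_oo; have : `|L| < 1 by rewrite ger0_norm.
  move/cvg_expr/cvgr0Pnorm_lt; apply; exact: divr_gt0.
apply: (@oo_near _ (N + M)%N) => n Hn.
have -> : n = (N + (n - N))%N by lia.
have Hm : (M <= n - N)%N by lia.
have := HM _ Hm; rewrite ger0_norm ?exprn_ge0 // => HLm.
apply: (le_lt_trans (claim _)).
have HeN : 0 <= `|e N| by rewrite normr_ge0.
have : L ^+ (n - N) * `|e N| <= d / (2 * (`|e N| + 1)) * `|e N|.
  by rewrite ler_wpM2r // ltW.
set c := d / (2 * (`|e N| + 1)).
have hc : c * (2 * (`|e N| + 1)) = d by rewrite /c divfK // gt_eqF.
have c0 : 0 < c by rewrite /c divr_gt0.
move=> H1; nra.
Qed.


Lemma subseq_cvg (A : nat -> R) (a : R) j : A @ \oo --> a -> (fun m => A (2 * m + j)%N) @ \oo --> a.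
Proof. move=> HA; apply: cvg_comp HA; move=> P [N _ HN]; exists N => // m /= Hm; apply: HN => /=; lia. Qed.

Lemma lin2 (K mu : R) (z u : nat -> R) : 0 < K -> `|mu| < K ->
  (fun n => u n / K ^+ n) @ \oo --> 0 ->
  (forall n, z n.+1 = mu * z n + u n) -> (fun n => z n / K ^+ n) @ \oo --> 0.
Proof.
move=> Kc HmK Hu Hz.
apply: (@lin1 (mu / K) _ (fun n => u n / K ^+ n * K^-1)).
- by rewrite normrM normfV (gtr0_norm Kc) ltr_pdivrMr // mul1r.
- by rewrite -(mul0r K^-1); apply: cvgM => //; exact: cvg_cst.
- move=> n; rewrite Hz exprS; field.
  by rewrite expf_neq0 ?gt_eqF.
Qed.

Lemma lin3 (K t d c mu1 mu2 : R) (z : nat -> R) : 1 < K ->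
  mu1 + mu2 = t -> mu1 * mu2 = - d -> `|mu1| < K -> `|mu2| < K ->
  (forall n, z n.+2 = t * z n.+1 + d * z n + c) -> (fun n => z n / K ^+ n) @ \oo --> 0.
Proof.
move=> K1 Ht Hd H1 H2 Hz.
have Kc : 0 < K by lra.
have Hc : (fun n => c / K ^+ n) @ \oo --> 0.
  have -> : (fun n => c / K ^+ n) = (fun n => c * (K^-1) ^+ n).
    by apply/funext => n; rewrite exprVn.
  rewrite -(mulr0 c); apply: cvgM; first exact: cvg_cst.
  apply: cvg_expr; rewrite normfV gtr0_norm // invf_lt1 //.
apply: (@lin2 K mu1 z (fun n => z n.+1 - mu1 * z n)) => //; last by move=> n; ring.
apply: (@lin2 K mu2 _ (fun _ => c)) => // n.
rewrite Hz -Ht; have -> : d = - (mu1 * mu2) by rewrite Hd opprK.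
ring.
Qed.

End Asym.

Section Vseq.
Variables (R : realType) (K : R) (v : nat -> R).
Hypotheses (K1 : 1 < K) (v0 : v 0%N = 1) (vS : forall n, v n.+1 = 1 + K * v n).

Let K0 : 0 < K. Proof. exact: lt_le_trans ltr01 (ltW K1). Qed.

Lemma v_ge1 n : 1 <= v n.
Proof. elim: n => [|n IH]; first by rewrite v0. rewrite vS; have := K1; nra. Qed.

Lemma v_neq0 n : v n != 0.
Proof. by apply: lt0r_neq0; apply: (lt_le_trans ltr01); exact: v_ge1. Qed.

Lemma v_closed n : v n * (K - 1) = K ^+ n.+1 - 1.
Proof. elim: n => [|n IH]; first by rewrite v0 expr1; ring. rewrite vS exprS; rewrite mulrDl mul1r -mulrA IH; ring. Qed.

Let rho := K^-1.
Let rho_lt1 : `|rho| < 1.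
Proof. by rewrite /rho normfV gtr0_norm ?invf_lt1 // invr_gt0. Qed.

Lemma rhoS : (fun n => rho ^+ n.+1) @ \oo --> 0.
Proof. by rewrite (cvg_shiftS (fun n => rho ^+ n)); exact: cvg_expr. Qed.

Lemma inv_v : (fun n => (v n)^-1) @ \oo --> 0.
Proof.
have -> : (fun n => (v n)^-1) = (fun n => (K - 1) * rho ^+ n.+1 * (1 - rho ^+ n.+1)^-1).
  apply/funext => n.
  have rp : 0 < rho by rewrite invr_gt0.
  have rl : rho < 1 by move: rho_lt1; rewrite gtr0_norm.
  have r1 : rho ^+ n.+1 < 1 by rewrite exprn_ilt1 // ltW.
  have hv := v_closed n.
  have hK : K ^+ n.+1 * rho ^+ n.+1 = 1 by rewrite /rho exprVn divff // expf_neq0 // gt_eqF.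
  apply: (@mulfI _ (v n)); first exact: v_neq0.
  rewrite divff ?v_neq0 //.
  have h1 : 1 - rho ^+ n.+1 != 0 by rewrite subr_eq0 eq_sym lt_eqF.
  apply: (@mulIf _ (1 - rho ^+ n.+1)) => //.
  rewrite mul1r -!mulrA mulVf // mulr1 mulrA hv; nra.
have H : (fun n => (K - 1) * rho ^+ n.+1 / (1 - rho ^+ n.+1)) @ \oo --> (K - 1) * 0 / (1 - 0).
  apply: cvgM; first by apply: cvgM; [exact: cvg_cst | exact: rhoS].
  by apply: cvgV; [rewrite subr0 oner_neq0 | apply: cvgB; [exact: cvg_cst | exact: rhoS]].
by rewrite mulr0 mul0r in H.
Qed.

Lemma Kv : (fun n => K ^+ n / v n) @ \oo --> (K - 1) / K.
Proof.
have -> : (fun n => K ^+ n / v n) = (fun n => (K - 1) / K * (1 - rho ^+ n.+1)^-1).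
  apply/funext => n.
  have rp : 0 < rho by rewrite invr_gt0.
  have rl : rho < 1 by move: rho_lt1; rewrite gtr0_norm.
  have r1 : rho ^+ n.+1 < 1 by rewrite exprn_ilt1 // ltW.
  have hv := v_closed n.
  have hK : K ^+ n.+1 * rho ^+ n.+1 = 1 by rewrite /rho exprVn divff // expf_neq0 // gt_eqF.
  have h1 : 1 - rho ^+ n.+1 != 0 by rewrite subr_eq0 eq_sym lt_eqF.
  have hT : 1 <= K ^+ n by rewrite exprn_ege1 // ltW.
  have ht : rho ^+ n.+1 = (K * K ^+ n)^-1 by rewrite /rho exprVn exprS.
  have K1' : K - 1 != 0 by rewrite subr_eq0 gt_eqF.
  have hvv : v n = (K * K ^+ n - 1) / (K - 1) by rewrite -exprS -hv mulfK.
  have KT : 1 < K * K ^+ n by rewrite -exprS exprn_egt1 // ltW.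
  rewrite ht hvv; field.
  apply/and4P; split; [by rewrite gt_eqF // (lt_le_trans ltr01 hT)| by rewrite gt_eqF
    | by rewrite subr_eq0 gt_eqF | exact: K1'].
have H : (fun n => (K - 1) / K / (1 - rho ^+ n.+1)) @ \oo --> (K - 1) / K / (1 - 0).
  apply: cvgM; first exact: cvg_cst.
  by apply: cvgV; [rewrite subr0 oner_neq0 | apply: cvgB; [exact: cvg_cst | exact: rhoS]].
by rewrite subr0 invr1 mulr1 in H.
Qed.

Lemma fin_lim (u : nat -> R) (m Kc : R) :
  (fun n => (u n - m * v n) / K ^+ n) @ \oo --> 0 ->
  (fun n => (u n - Kc) / v n) @ \oo --> m.
Proof.
move=> HZ.
have -> : (fun n => (u n - Kc) / v n) =
   (fun n => m + (u n - m * v n) / K ^+ n * (K ^+ n / v n) - Kc * (v n)^-1).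
  apply/funext => n; field.
  by rewrite v_neq0 expf_neq0 // gt_eqF.
have H : (fun n => m + (u n - m * v n) / K ^+ n * (K ^+ n / v n) - Kc * (v n)^-1)
   @ \oo --> m + 0 * ((K - 1) / K) - Kc * 0.
  apply: cvgB; last by apply: cvgM; [exact: cvg_cst | exact: inv_v].
  apply: cvgD; first exact: cvg_cst.
  by apply: cvgM; [exact: HZ | exact: Kv].
by rewrite mul0r mulr0 addr0 subr0 in H.
Qed.

Lemma two_step (u : nat -> R) (al Kc : R) j :
  (forall n, u n.+2 - al * v n.+2 = K ^+ 2 * (u n - al * v n)) ->
  (fun m => (u (2 * m + j)%N - Kc) / v (2 * m + j)%N) @ \oo -->
     al + (u j - al * v j) / K ^+ j * ((K - 1) / K).
Proof.
move=> H2.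
have cl : forall m, u (2 * m + j)%N - al * v (2 * m + j)%N = K ^+ (2 * m) * (u j - al * v j).
  elim=> [|m IH]; first by rewrite muln0 add0n expr0 mul1r.
  have -> : (2 * m.+1 + j = (2 * m + j).+2)%N by lia.
  by rewrite H2 IH mulrA -exprD; congr (_ ^+ _ * _); lia.
set E := u j - al * v j.
have -> : (fun m => (u (2 * m + j)%N - Kc) / v (2 * m + j)%N) =
   (fun m => al + E / K ^+ j * (K ^+ (2 * m + j)%N / v (2 * m + j)%N) - Kc * (v (2 * m + j)%N)^-1).
  apply/funext => m.
  have -> : u (2 * m + j)%N = al * v (2 * m + j)%N + K ^+ (2 * m) * E by rewrite -cl; ring.
  rewrite exprD; field.
  by rewrite v_neq0 !expf_neq0 // gt_eqF.
have H : (fun m => al + E / K ^+ j * (K ^+ (2 * m + j)%N / v (2 * m + j)%N) - Kc * (v (2 * m + j)%N)^-1)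
   @ \oo --> al + E / K ^+ j * ((K - 1) / K) - Kc * 0.
  apply: cvgB; last by apply: cvgM; [exact: cvg_cst | exact: (subseq_cvg j inv_v)].
  apply: cvgD; first exact: cvg_cst.
  by apply: cvgM; [exact: cvg_cst | exact: (subseq_cvg j Kv)].
by rewrite mulr0 subr0 in H.
Qed.

End Vseq.

Section Rec.
Variables (R : realType) (k q r a0 a1 a2 : R) (s0 s1 s2 v : nat -> R).
Hypotheses (k1 : 1 < k) (q0 : 0 < q) (qk : q < k) (r0 : 0 <= r) (rk : r <= k).
Hypotheses (s00 : s0 0%N = a0) (s10 : s1 0%N = a1) (s20 : s2 0%N = a2).
Hypotheses (s0S : forall n, s0 n.+1 = a0 + r * s0 n + (k - r) * s1 n)
           (s1S : forall n, s1 n.+1 = a1 + (k - q) * s0 n + q * s2 n)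
           (s2S : forall n, s2 n.+1 = a2 + k * s1 n).
Hypotheses (v0 : v 0%N = 1) (vS : forall n, v n.+1 = 1 + k * v n).

Let p0 := k * (k - q).
Let p1 := k * (k - r).
Let p2 := q * (k - r).
Let P := p0 + p1 + p2.
Definition mlim := (p0 * a0 + p1 * a1 + p2 * a2) / P.

Let P0 : 0 < P.
Proof. rewrite /P /p0 /p1 /p2; have := k1; have := q0; have := qk; have := rk; nra. Qed.

Lemma pisum n : p0 * s0 n + p1 * s1 n + p2 * s2 n = (p0 * a0 + p1 * a1 + p2 * a2) * v n.
Proof.
elim: n => [|n IH]; first by rewrite s00 s10 s20 v0 mulr1.
have -> : p0 * s0 n.+1 + p1 * s1 n.+1 + p2 * s2 n.+1 =
   (p0 * a0 + p1 * a1 + p2 * a2) + k * (p0 * s0 n + p1 * s1 n + p2 * s2 n).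
  rewrite s0S s1S s2S /p0 /p1 /p2; ring.
by rewrite IH vS; ring.
Qed.

Hypothesis rpos : 0 < r.

Ltac hy := have := k1; have := q0; have := qk; have := r0; have := rk; have := rpos.

Let D := Num.sqrt ((r - k) ^+ 2 + 4 * r * q).
Let mu1 := ((r - k) + D) / 2.
Let mu2 := ((r - k) - D) / 2.

Let X0 : 0 <= (r - k) ^+ 2 + 4 * r * q.
Proof. have := sqr_ge0 (r - k); hy; nra. Qed.

Let D0 : 0 <= D. Proof. exact: sqrtr_ge0. Qed.
Let D2 : D ^+ 2 = (r - k) ^+ 2 + 4 * r * q. Proof. exact: sqr_sqrtr. Qed.
Let Dlt : D < k + r.
Proof.
have H : D ^+ 2 < (k + r) ^+ 2 by rewrite D2; hy; nra.
rewrite ltNge; apply/negP => H2; move: H; rewrite ltNge => /negP; apply.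
by rewrite ler_pXn2r // ?nnegrE //; hy; nra.
Qed.

Let mu_sum : mu1 + mu2 = r - k. Proof. by rewrite /mu1 /mu2; field. Qed.
Let mu_prod : mu1 * mu2 = - (r * q).
Proof.
have -> : mu1 * mu2 = ((r - k) ^+ 2 - D ^+ 2) / 4 by rewrite /mu1 /mu2; field.
by rewrite D2; field.
Qed.
Let mu1_lt : `|mu1| < k.
Proof. rewrite ltr_norml /mu1; have := D0; have := Dlt; hy; move=> *; apply/andP; split; lra. Qed.
Let mu2_lt : `|mu2| < k.
Proof. rewrite ltr_norml /mu2; have := D0; have := Dlt; hy; move=> *; apply/andP; split; lra. Qed.

Let xlim : (fun n => (s0 n - s1 n) / k ^+ n) @ \oo --> 0.
Proof.
apply: (@lin3 _ k (r - k) (r * q) ((1 + q) * (a0 - a1) + q * (a1 - a2)) mu1 mu2) => //.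
move=> n /=; do 2 rewrite ?s0S ?s1S ?s2S; ring.
Qed.

Let ylim : (fun n => (s1 n - s2 n) / k ^+ n) @ \oo --> 0.
Proof.
apply: (@lin3 _ k (r - k) (r * q) ((1 - (r - k + q)) * (a1 - a2) + (k - q) * (a0 - a1)) mu1 mu2) => //.
move=> n /=; do 2 rewrite ?s0S ?s1S ?s2S; ring.
Qed.

Lemma limA (u : nat -> R) (Kc : R) : u = s0 \/ u = s1 \/ u = s2 ->
  (fun n => (u n.+1 - Kc) / v n.+1) @ \oo --> mlim.
Proof.
move=> Hu.
rewrite (cvg_shiftS (fun n => (u n - Kc) / v n)).
apply: (@fin_lim _ k) => //.
have kn : forall n, k ^+ n != 0 by move=> n; rewrite expf_neq0 // gt_eqF //; have := k1; lra.
have mv : forall n, mlim * v n = (p0 * s0 n + p1 * s1 n + p2 * s2 n) / P.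
  by move=> n; rewrite pisum /mlim mulrAC.
case: Hu => [->|[->|->]].
- have -> : (fun n => (s0 n - mlim * v n) / k ^+ n) =
     (fun n => (p1 + p2) / P * ((s0 n - s1 n) / k ^+ n) + p2 / P * ((s1 n - s2 n) / k ^+ n)).
    apply/funext => n; rewrite mv /P; field; rewrite kn /=.
    by rewrite -/P gt_eqF.
  have H := cvgD (cvgM (cvg_cst ((p1 + p2) / P)) xlim) (cvgM (cvg_cst (p2 / P)) ylim).
  by rewrite !mulr0 addr0 in H; exact: H.
- have -> : (fun n => (s1 n - mlim * v n) / k ^+ n) =
     (fun n => - p0 / P * ((s0 n - s1 n) / k ^+ n) + p2 / P * ((s1 n - s2 n) / k ^+ n)).
    apply/funext => n; rewrite mv /P; field; rewrite kn /=.
    by rewrite -/P gt_eqF.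
  have H := cvgD (cvgM (cvg_cst (- p0 / P)) xlim) (cvgM (cvg_cst (p2 / P)) ylim).
  by rewrite !mulr0 addr0 in H; exact: H.
- have -> : (fun n => (s2 n - mlim * v n) / k ^+ n) =
     (fun n => - p0 / P * ((s0 n - s1 n) / k ^+ n) - (p0 + p1) / P * ((s1 n - s2 n) / k ^+ n)).
    apply/funext => n; rewrite mv /P; field; rewrite kn /=.
    by rewrite -/P gt_eqF.
  have H := cvgB (cvgM (cvg_cst (- p0 / P)) xlim) (cvgM (cvg_cst ((p0 + p1) / P)) ylim).
  by rewrite !mulr0 subr0 in H; exact: H.
Qed.

End Rec.

Section RecB.
Variables (R : realType) (k q r a0 a1 a2 : R) (s0 s1 s2 v : nat -> R).
Hypotheses (k1 : 1 < k) (r0 : r = 0).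
Hypotheses (s00 : s0 0%N = a0) (s10 : s1 0%N = a1) (s20 : s2 0%N = a2).
Hypotheses (s0S : forall n, s0 n.+1 = a0 + r * s0 n + (k - r) * s1 n)
           (s1S : forall n, s1 n.+1 = a1 + (k - q) * s0 n + q * s2 n)
           (s2S : forall n, s2 n.+1 = a2 + k * s1 n).
Hypotheses (v0 : v 0%N = 1) (vS : forall n, v n.+1 = 1 + k * v n).

Definition T1 := (k - q) / (k + 1) * a0 + 1 / (k + 1) * a1 + q / (k + 1) * a2.
Definition T2 := (k - q) / (k * (k + 1)) * a0 + k / (k + 1) * a1 + q / (k * (k + 1)) * a2.

Let k0 : k != 0. Proof. by rewrite gt_eqF //; have := k1; lra. Qed.
Let kp1 : k + 1 != 0. Proof. by rewrite gt_eqF //; have := k1; lra. Qed.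

Lemma s02 n : s2 n = s0 n - (a0 - a2).
Proof. case: n => [|n]; first by rewrite s00 s20; ring. by rewrite s0S s2S r0; ring. Qed.

Let ag := (a0 + k * a1 - k * q * (a0 - a2)) / (k + 1).
Let ah := (a1 - q * (a0 - a2) + k * a0) / (k + 1).

Let two0 n : s0 n.+2 - ag * v n.+2 = k ^+ 2 * (s0 n - ag * v n).
Proof.
rewrite s0S s1S s02 !vS r0 /ag; field.
by rewrite kp1.
Qed.

Let two1 n : s1 n.+2 - ah * v n.+2 = k ^+ 2 * (s1 n - ah * v n).
Proof.
rewrite s1S s02 s0S !vS r0 /ah; field.
by rewrite kp1.
Qed.

Lemma limB00 Kc : (fun m => (s0 (2 * m + 0)%N - Kc) / v (2 * m + 0)%N) @ \oo --> T1.
Proof.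
have H := @two_step R k v k1 v0 vS s0 ag Kc 0 two0.
suff <- : ag + (s0 0 - ag * v 0) / k ^+ 0 * ((k - 1) / k) = T1 by [].
rewrite s00 v0 /ag /T1; field; by rewrite kp1 k0.
Qed.

Lemma limB01 Kc : (fun m => (s0 (2 * m + 1)%N - Kc) / v (2 * m + 1)%N) @ \oo --> T2.
Proof.
have H := @two_step R k v k1 v0 vS s0 ag Kc 1 two0.
suff <- : ag + (s0 1 - ag * v 1) / k ^+ 1 * ((k - 1) / k) = T2 by [].
rewrite s0S s00 s10 vS v0 r0 /ag /T2; field; by rewrite kp1 k0.
Qed.

Lemma limB10 Kc : (fun m => (s1 (2 * m + 0)%N - Kc) / v (2 * m + 0)%N) @ \oo --> T2.
Proof.
have H := @two_step R k v k1 v0 vS s1 ah Kc 0 two1.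
suff <- : ah + (s1 0 - ah * v 0) / k ^+ 0 * ((k - 1) / k) = T2 by [].
rewrite s10 v0 /ah /T2; field; by rewrite kp1 k0.
Qed.

Lemma limB11 Kc : (fun m => (s1 (2 * m + 1)%N - Kc) / v (2 * m + 1)%N) @ \oo --> T1.
Proof.
have H := @two_step R k v k1 v0 vS s1 ah Kc 1 two1.
suff <- : ah + (s1 1 - ah * v 1) / k ^+ 1 * ((k - 1) / k) = T1 by [].
rewrite s1S s00 s20 vS v0 /ah /T1; field; by rewrite kp1 k0.
Qed.

Lemma limB2 j Kc (L : R) : (fun m => (s0 (2 * m + j)%N - (Kc + (a0 - a2))) / v (2 * m + j)%N) @ \oo --> L ->
  (fun m => (s2 (2 * m + j)%N - Kc) / v (2 * m + j)%N) @ \oo --> L.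
Proof.
move=> H; suff -> : (fun m => (s2 (2 * m + j)%N - Kc) / v (2 * m + j)%N) =
  (fun m => (s0 (2 * m + j)%N - (Kc + (a0 - a2))) / v (2 * m + j)%N) by [].
by apply/funext => m; rewrite s02; congr (_ / _); ring.
Qed.

End RecB.

Theorem proposition1 (R : realType) (k q r : nat) (beta J h1 h2 : R)
    (l : vertex k -> lab) :
  (2 <= k)%N -> (1 <= q)%N -> (q <= k - 1)%N -> (r <= k)%N ->
  odd r = odd k ->
  0 < beta ->
  h1 = q%:R * f_theta (tanh (beta * J)) h2 ->
  h2 = k%:R * f_theta (tanh (beta * J)) h1 ->
  alternating_bc k q r l ->
  let h := bc h1 h2 l in
  let a := a_fun beta J in
  let F := fun n => Fn k n beta J h in
  let kR := (k%:R : R) in let qR := (q%:R : R) in let rR := (r%:R : R) in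
  (* (a) *)
  ((r != 0)%N ->
     F @ \oo --> kR * (kR - qR) / (2 * kR ^+ 2 - rR * kR - rR * qR) *
        (a 0 + (kR - rR) / (kR - qR) * a h1
             + qR * (kR - rR) / (kR * (kR - qR)) * a h2))
  (* (b), root value 0, h2 or -h2 *)
  /\ (r = 0%N -> l [::] \in [:: L0; Lp2; Lm2] ->
     (fun m => F (2 * m)%N) @ \oo -->
        (kR - qR) / (kR + 1) * a 0 + 1 / (kR + 1) * a h1 + qR / (kR + 1) * a h2
     /\ (fun m => F (2 * m).+1) @ \oo -->
        (kR - qR) / (kR * (kR + 1)) * a 0 + kR / (kR + 1) * a h1
          + qR / (kR * (kR + 1)) * a h2)
  (* (b), root value h1 or -h1 *)
  /\ (r = 0%N -> l [::] \in [:: Lp1; Lm1] ->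
     (fun m => F (2 * m)%N) @ \oo -->
        (kR - qR) / (kR * (kR + 1)) * a 0 + kR / (kR + 1) * a h1
          + qR / (kR * (kR + 1)) * a h2
     /\ (fun m => F (2 * m).+1) @ \oo -->
        (kR - qR) / (kR + 1) * a 0 + 1 / (kR + 1) * a h1 + qR / (kR + 1) * a h2).
Proof.
move=> k2 q1 qk1 rk oddrk beta0 Hh1 Hh2 Hl h a F kR qR rR.
have qk : (q <= k)%N by lia.
have Hc : compat beta J h := compat_bc qk rk oddrk Hh1 Hh2 Hl.
set S0 := s0 k q r beta J h1 h2.
set S1 := s1 k q r beta J h1 h2.
set S2 := s2 k q r beta J h1 h2.
set vv : nat -> R := fun n => (size (words k n))%:R.
have k1R : 1 < kR by rewrite /kR ltr1n.
have q0R : 0 < qR by rewrite /qR ltr0n.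
have qkR : qR < kR by rewrite /qR /kR ltr_nat; lia.
have r0R : 0 <= rR by rewrite /rR ler0n.
have rkR : rR <= kR by rewrite /rR /kR ler_nat.
have s00 : S0 0%N = a 0 by [].
have s10 : S1 0%N = a h1 by [].
have s20 : S2 0%N = a h2 by [].
have s0S' : forall n, S0 n.+1 = a 0 + rR * S0 n + (kR - rR) * S1 n by move=> n; exact: s0S.
have s1S' : forall n, S1 n.+1 = a h1 + (kR - qR) * S0 n + qR * S2 n by move=> n; exact: s1S.
have s2S' : forall n, S2 n.+1 = a h2 + kR * S1 n by move=> n; exact: s2S.
have v0 : vv 0%N = 1 by [].
have vS : forall n, vv n.+1 = 1 + kR * vv n.
  by move=> n; rewrite /vv size_words_S -addn1 natrD natrM /kR; ring.
set u := fun n => sigl k q r beta J h1 h2 n (l [::]).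
set Kc := a (h [::]) + ln (expR (h [::]) + expR (- h [::])) / beta.
have FF : forall n, F n.+1 = (u n.+1 - Kc) / vv n.+1.
  move=> n; rewrite /F F_form // card_Vn -/(vv n.+1).
  have vn0 : vv n.+1 != 0 by rewrite /vv pnatr_eq0 size_words_S.
  rewrite /u -(Ssum_bc beta J h1 h2 qk rk oddrk n.+1 Hl) -/h /= /Kc /a.
  field; by rewrite vn0 gt_eqF.
split.
  move=> rn0.
  have rpos : 0 < rR by rewrite /rR ltr0n lt0n.
  have -> : kR * (kR - qR) / (2 * kR ^+ 2 - rR * kR - rR * qR) *
        (a 0 + (kR - rR) / (kR - qR) * a h1
             + qR * (kR - rR) / (kR * (kR - qR)) * a h2) = mlim kR qR rR (a 0) (a h1) (a h2).
    rewrite /mlim; field; rewrite -/kR -/qR -/rR.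
    by apply/and3P; split; apply: lt0r_neq0; nra.
  rewrite -(cvg_shiftS F).
  have -> : [sequence F n.+1]_n = (fun n => (u n.+1 - Kc) / vv n.+1).
    by apply/funext => n /=; exact: FF.
  apply: (@limA R kR qR rR (a 0) (a h1) (a h2) S0 S1 S2 vv) => //.
  by rewrite /u; case: (l [::]); [left|right; left|right; left|right; right|right; right].
have ev : forall (U : nat -> R) (L : R),
    (fun m => (U (2 * m + 0)%N - Kc) / vv (2 * m + 0)%N) @ \oo --> L ->
    (forall n, u n = U n) -> (fun m => F (2 * m)%N) @ \oo --> L.
  move=> U L HU Hu; rewrite -(cvg_shiftS (fun m => F (2 * m)%N)).
  rewrite -(cvg_shiftS (fun m => (U (2 * m + 0)%N - Kc) / vv (2 * m + 0)%N)) in HU.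
  suff -> : [sequence F (2 * n.+1)%N]_n =
            [sequence (U (2 * n.+1 + 0)%N - Kc) / vv (2 * n.+1 + 0)%N]_n by [].
  apply/funext => n /=.
  rewrite (_ : (2 * n.+1)%N = (2 * n + 1).+1); last by lia.
  by rewrite addn0 FF Hu.
have od : forall (U : nat -> R) (L : R),
    (fun m => (U (2 * m + 1)%N - Kc) / vv (2 * m + 1)%N) @ \oo --> L ->
    (forall n, u n = U n) -> (fun m => F (2 * m).+1) @ \oo --> L.
  move=> U L HU Hu.
  suff -> : (fun m => F (2 * m).+1) = (fun m => (U (2 * m + 1)%N - Kc) / vv (2 * m + 1)%N) by [].
  by apply/funext => m; rewrite FF Hu addn1.
split.
  move=> r0 Hroot.
  have rz : rR = 0 by rewrite /rR r0.
  move: Hroot; rewrite !inE => /orP [/eqP E | /orP [/eqP E | /eqP E]].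
  - have Hu : forall n, u n = S0 n by move=> n; rewrite /u E.
    split.
      apply: (ev S0) => //.
      exact: (@limB00 R kR qR rR _ _ _ S0 S1 S2 vv).
    apply: (od S0) => //.
    exact: (@limB01 R kR qR rR _ _ _ S0 S1 S2 vv).
  - have Hu : forall n, u n = S2 n by move=> n; rewrite /u E.
    split.
      apply: (ev S2) => //.
      apply: (@limB2 R kR rR _ _ S0 S1 S2 vv) => //.
      exact: (@limB00 R kR qR rR _ _ _ S0 S1 S2 vv).
    apply: (od S2) => //.
    apply: (@limB2 R kR rR _ _ S0 S1 S2 vv) => //.
    exact: (@limB01 R kR qR rR _ _ _ S0 S1 S2 vv).
  - have Hu : forall n, u n = S2 n by move=> n; rewrite /u E.
    split.
      apply: (ev S2) => //.
      apply: (@limB2 R kR rR _ _ S0 S1 S2 vv) => //.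
      exact: (@limB00 R kR qR rR _ _ _ S0 S1 S2 vv).
    apply: (od S2) => //.
    apply: (@limB2 R kR rR _ _ S0 S1 S2 vv) => //.
    exact: (@limB01 R kR qR rR _ _ _ S0 S1 S2 vv).
move=> r0 Hroot.
have rz : rR = 0 by rewrite /rR r0.
have Hu : forall n, u n = S1 n.
  by move: Hroot; rewrite !inE => /orP [/eqP E | /eqP E] n; rewrite /u E.
split.
  apply: (ev S1) => //.
  exact: (@limB10 R kR qR rR _ _ _ S0 S1 S2 vv).
apply: (od S1) => //.
exact: (@limB11 R kR qR rR _ _ _ S0 S1 S2 vv).
Qed.
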